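(* Let $n\geq2$, $H=\{x\in\mathbb{R}^{n+1}:\sum_i x_i=0\}$, $A_n=\mathbb{Z}^{n+1}\cap H$, $\mathcal{P}$ the Voronoi region of $A_n$ in $H$ with vertex set $V_{\mathcal{P}}$, $p_H$ the orthogonal projection onto $H$, and $A_n^\#=p_H(\mathbb{Z}^{n+1})$. Let $\tilde G$ be the Cayley graph on $\frac12A_n^\#$ with generating set $\frac12V_{\mathcal{P}}$ (i.e. $x,y$ adjacent iff $x-y\in\frac12V_{\mathcal{P}}$), with graph distance $\tilde d$. Then for all $u_1,u_2\in\frac12A_n^\#$, $\tilde d(u_1,u_2)=2$ implies $\Vert u_1-u_2\Vert_{\mathcal{P}}=1$.
   Context: The Voronoi region of a lattice $\Lambda$ in a Euclidean space $E$ is $\{z\in E:\langle z-x,z-x\rangle\geq\langle z,z\rangle\ \forall x\in\Lambda\}$. $\Vert x\Vert_{\mathcal{P}}=\inf\{\lambda\geq0:x\in\lambda\mathcal{P}\}$. It is known that $V_{\mathcal{P}}=\{p_H(u):u\in\{0,1\}^{n+1}\setminus\{(0,\dots,0),(1,\dots,1)\}\}$ and that $\Vert x\Vert_{\mathcal{P}}=\max_j x_j-\min_i x_i$ for $x\in H$. *)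

(* Defs.v *)
From mathcomp Require Import all_boot all_order all_algebra.
From mathcomp Require Import boolp classical_sets reals.
Set Implicit Arguments. Unset Strict Implicit. Unset Printing Implicit Defensive.
Import Order.TTheory GRing.Theory Num.Theory.
Local Open Scope ring_scope.
Local Open Scope classical_set_scope.

Section Defs.
Variables (R : realType) (n : nat).
Notation V := 'rV[R]_(n.+1).

Definition dotp (x y : V) : R := \sum_(i < n.+1) x 0 i * y 0 i.

Definition Hplane : set V := [set x | \sum_(i < n.+1) x 0 i = 0].

Definition Zvec : set V := [set x | forall i, exists z : int, x 0 i = z%:~R].

Definition An : set V := Zvec `&` Hplane.

Definition voronoi : set V :=
  [set z | Hplane z /\ forall x, An x -> dotp (z - x) (z - x) >= dotp z z].

Definition extreme_points (S : set V) : set V :=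
  [set z | S z /\ forall a b (t : R), S a -> S b -> 0 < t -> t < 1 ->
     z = t *: a + (1 - t) *: b -> a = z /\ b = z].

Definition VP : set V := extreme_points voronoi.

Definition pH (x : V) : V :=
  x - ((\sum_(i < n.+1) x 0 i) / n.+1%:R) *: const_mx 1.

Definition Ansharp : set V := pH @` Zvec.

Definition half (S : set V) : set V := [set 2^-1 *: x | x in S].

Definition gauge (P : set V) (x : V) : R :=
  inf [set l : R | 0 <= l /\ exists2 p, P p & x = l *: p].

Definition cvert : set V := half Ansharp.
Definition cadj (x y : V) : Prop := cvert x /\ cvert y /\ half VP (x - y).

Fixpoint walk (k : nat) (x y : V) : Prop :=
  match k with
  | 0 => x = y
  | k.+1 => exists z, cadj x z /\ walk k z y
  end.

Definition gdist_is (x y : V) (k : nat) : Prop :=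
  walk k x y /\ forall j, (j < k)%N -> ~ walk j x y.

End Defs.

(* Main.v *)
Require Import Defs.
From mathcomp Require Import all_boot all_order all_algebra.
From mathcomp Require Import boolp classical_sets reals.
From mathcomp Require Import ring lra zify.
Set Implicit Arguments. Unset Strict Implicit. Unset Printing Implicit Defensive.
Import Order.TTheory GRing.Theory Num.Theory.
Local Open Scope ring_scope.
Local Open Scope classical_set_scope.

Section S.
Variables (R : realType) (n : nat).
Notation V := 'rV[R]_(n.+1).

Lemma exmin (z : V) : exists k, forall i, z 0 k <= z 0 i.
Proof.
case: (@arg_minP _ R _ (ord0 : 'I_n.+1) xpredT (fun i => z 0 i) isT) => k _ H.
by exists k => i; apply: H.
Qed.

Lemma const_H (v : V) (d : R) : Hplane v -> (forall i, v 0 i = d) -> d = 0.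
Proof.
rewrite /Hplane /= => Hs Hc.
move: Hs; under eq_bigr do rewrite Hc.
rewrite sumr_const card_ord => /eqP; rewrite mulrn_eq0 /=. by move/eqP.
Qed.

Lemma sum_delta (y : V) (i : 'I_n.+1) :
  \sum_(l < n.+1) y 0 l * (l == i)%:R = y 0 i.
Proof.
rewrite (bigD1 i) //= eqxx mulr1 big1 ?addr0 // => l /negbTE ->; by rewrite mulr0.
Qed.

Lemma sum_ind (i : 'I_n.+1) : \sum_(l < n.+1) (l == i)%:R = 1 :> R.
Proof.
rewrite (bigD1 i) //= eqxx big1 ?addr0 // => l /negbTE ->; by [].
Qed.

Lemma dotp_exp (z x : V) :
  dotp (z - x) (z - x) = dotp z z - 2 * dotp z x + dotp x x.
Proof.
rewrite /dotp mulr_sumr -sumrB -big_split /=; apply: eq_bigr => l _.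
rewrite !mxE; ring.
Qed.

Definition P' (z : V) := Hplane z /\ forall i j, z 0 i - z 0 j <= 1.

Lemma vor_P (z : V) : voronoi z -> P' z.
Proof.
case=> Hz Hx; split => // i j.
have [->|nij] := eqVneq i j; first by rewrite subrr ler01.
pose x : V := \row_l ((l == i)%:R - (l == j)%:R).
have Ax : An x.
  split.
    move=> l; exists ((l == i)%:Z - (l == j)%:Z); rewrite mxE.
    by rewrite rmorphB /= -!pmulrn.
  rewrite /Hplane /=; under eq_bigr do rewrite mxE.
  by rewrite sumrB !sum_ind subrr.
have := Hx x Ax; rewrite dotp_exp.
have dx : forall y : V, dotp y x = y 0 i - y 0 j.
  move=> y; rewrite /dotp; under eq_bigr do rewrite mxE mulrBr.
  by rewrite sumrB !sum_delta.
rewrite !dx !mxE eqxx (negbTE nij) eq_sym (negbTE nij) /=.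
rewrite eqxx /= => H; lra.
Qed.

Lemma int_term (w : int) (y : R) : -(1/2) <= y -> y <= 1/2 ->
  0 <= w%:~R * w%:~R - 2 * (y * w%:~R).
Proof.
move=> h1 h2.
have : (w <= -1)%R \/ w = 0 \/ (1 <= w)%R by lia.
case=> [h|[->|h]].
- have : (w%:~R <= -1 :> R) by rewrite -(ler_int R) in h.
  move=> h'; nra.
- rewrite mulr0; lra.
- have : (1 <= w%:~R :> R) by rewrite -(ler_int R) in h.
  move=> h'; nra.
Qed.

Lemma P_vor (z : V) : P' z -> voronoi z.
Proof.
case=> Hz Hd; split => // x [Zx Hx].
have [k Hk] := exmin z.
set c := z 0 k + 1/2.
have E : dotp (z - x) (z - x) - dotp z z =
   \sum_(l < n.+1) (x 0 l * x 0 l - 2 * ((z 0 l - c) * x 0 l)).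
  have -> : \sum_(l < n.+1) (x 0 l * x 0 l - 2 * ((z 0 l - c) * x 0 l)) =
     \sum_(l < n.+1) (x 0 l * x 0 l - 2 * (z 0 l * x 0 l)) + 2 * c * \sum_(l < n.+1) x 0 l.
    rewrite mulr_sumr -big_split; apply: eq_bigr => l _ /=; ring.
  move: Hx; rewrite /Hplane /= => ->; rewrite mulr0 addr0 sumrB -mulr_sumr dotp_exp /dotp.
  ring.
rewrite -subr_ge0 E; apply: sumr_ge0 => l _.
have [w ->] := Zx l.
apply: int_term; have := Hk l; have := Hd l k; rewrite /c; lra.
Qed.


Lemma sum_const1 (c : R) : \sum_(l < n.+1) (c *: (const_mx 1 : V)) 0 l = c * n.+1%:R.
Proof.
under eq_bigr do rewrite !mxE mulr1.
by rewrite sumr_const card_ord mulr_natr.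
Qed.

Lemma VP_sub (z : V) : VP z -> exists c, forall i, z 0 i = c \/ z 0 i = c + 1.
Proof.
case=> Vz Ext.
have [Hz Hd] := vor_P Vz.
have [k Hk] := exmin z.
set m := z 0 k.
pose g : V := \row_i ((z 0 i - m) * (m + 1 - z 0 i)).
pose cg := (\sum_(l < n.+1) g 0 l) / n.+1%:R.
have ecg : cg * n.+1%:R = \sum_(l < n.+1) g 0 l by rewrite /cg divfK // pnatr_eq0.
pose a := z + g - cg *: (const_mx 1 : V).
pose b := z - g + cg *: (const_mx 1 : V).
have ae : forall i, a 0 i = z 0 i + g 0 i - cg by move=> i; rewrite !mxE mulr1.
have be : forall i, b 0 i = z 0 i - g 0 i + cg by move=> i; rewrite !mxE mulr1.
have sc : \sum_(l < n.+1) cg = \sum_(l < n.+1) g 0 l by rewrite sumr_const card_ord -mulr_natr.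
have Pa : voronoi a.
  apply: P_vor; split.
    rewrite /Hplane /=; under eq_bigr do rewrite ae.
    rewrite sumrB big_split /= sc.
    move: Hz; rewrite /Hplane /= => ->; rewrite add0r subrr //.
  move=> i j; rewrite !ae !mxE.
  have := Hk i; have := Hk j; have := Hd i k; have := Hd j k; rewrite -/m; nra.
have Pb : voronoi b.
  apply: P_vor; split.
    rewrite /Hplane /=; under eq_bigr do rewrite be.
    rewrite big_split /= sumrB sc.
    move: Hz; rewrite /Hplane /= => ->; rewrite sub0r addrC subrr //.
  move=> i j; rewrite !be !mxE.
  have := Hk i; have := Hk j; have := Hd i k; have := Hd j k; rewrite -/m; nra.
have hz : z = 2^-1 *: a + (1 - 2^-1) *: b.
  apply/rowP => i; rewrite !mxE.
set p := (z 0 i - m) * _; lra.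
have [ea _] := Ext a b 2^-1 Pa Pb ltac:(lra) ltac:(lra) hz.
have gk : g 0 k = 0 by rewrite mxE subrr mul0r.
have c0 : cg = 0.
  have := ae k; rewrite ea gk; lra.
exists m => i.
have := ae i; rewrite ea c0 mxE => h0.
have : (z 0 i - m) * (m + 1 - z 0 i) == 0 by apply/eqP; lra.
rewrite mulf_eq0 => /orP[|] /eqP h.
  by left; lra.
by right; lra.
Qed.


Lemma eq_of (z a : V) (c : R) i1 j1 : Hplane z -> Hplane a ->
  (forall i, z 0 i = c \/ z 0 i = c + 1) -> z 0 i1 = c + 1 -> z 0 j1 = c ->
  (forall i j, z 0 i = c + 1 -> z 0 j = c -> a 0 i - a 0 j = 1) -> a = z.
Proof.
move=> Hz Ha Hc hi hj Hr.
have Hv : Hplane (a - z).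
  move: Hz Ha; rewrite /Hplane /= => Hz Ha.
  under eq_bigr do rewrite !mxE. by rewrite sumrB Hz Ha subrr.
have Cv : forall i, (a - z) 0 i = a 0 j1 - z 0 j1.
  move=> i; rewrite !mxE; case: (Hc i) => h.
    have := Hr i1 i hi h; have := Hr i1 j1 hi hj; lra.
  have := Hr i j1 h hj; lra.
have d0 := const_H Hv Cv.
apply/rowP => i; have := Cv i; rewrite d0 !mxE; lra.
Qed.

Lemma VP_sup (z : V) (c : R) i1 j1 : Hplane z ->
  (forall i, z 0 i = c \/ z 0 i = c + 1) -> z 0 i1 = c + 1 -> z 0 j1 = c -> VP z.
Proof.
move=> Hz Hc hi hj.
have Vz : voronoi z.
  apply: P_vor; split => // i j.
  by case: (Hc i) => ->; case: (Hc j) => ->; lra.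
split => // a b t Va Vb t0 t1 ez.
have [Ha Hda] := vor_P Va.
have [Hb Hdb] := vor_P Vb.
have key : forall i j, z 0 i = c + 1 -> z 0 j = c -> a 0 i - a 0 j = 1 /\ b 0 i - b 0 j = 1.
  move=> i j h1 h2.
  have e1 : z 0 i = t * a 0 i + (1 - t) * b 0 i by rewrite ez !mxE.
  have e2 : z 0 j = t * a 0 j + (1 - t) * b 0 j by rewrite ez !mxE.
  have := Hda i j; have := Hdb i j; nra.
split.
  by apply: (eq_of Hz Ha Hc hi hj) => i j h1 h2; case: (key i j h1 h2).
by apply: (eq_of Hz Hb Hc hi hj) => i j h1 h2; case: (key i j h1 h2).
Qed.


Lemma half_or0 (x : V) (c : R) : Hplane x ->
  (forall i, x 0 i = c \/ x 0 i = c + 1/2) -> x = 0 \/ Defs.half (@VP R n) x.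
Proof.
move=> Hx Hc.
case: (pselect (exists i, x 0 i = c + 1/2)) => [[i hi]|n1].
  case: (pselect (exists j, x 0 j = c)) => [[j hj]|n0].
    right; exists (2 *: x); last by rewrite scalerA mulVf ?scale1r // pnatr_eq0.
    apply: (@VP_sup _ (2 * c) i j).
    - move: Hx; rewrite /Hplane /= => Hx.
      under eq_bigr do rewrite mxE. by rewrite -mulr_sumr Hx mulr0.
    - move=> l; rewrite mxE; case: (Hc l) => ->; [left|right]; lra.
    - rewrite mxE hi; lra.
    - rewrite mxE hj; lra.
  left.
  have Cv : forall l, x 0 l = c + 1/2.
    move=> l; case: (Hc l) => // h; exfalso; apply: n0; by exists l.
  have d0 := const_H Hx Cv.
  by apply/rowP => l; rewrite Cv d0 mxE.
left.
have Cv : forall l, x 0 l = c.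
  move=> l; case: (Hc l) => // h; exfalso; apply: n1; by exists l.
have d0 := const_H Hx Cv.
by apply/rowP => l; rewrite Cv d0 mxE.
Qed.

End S.

Theorem lemma10 (R : realType) (n : nat) (hn : (2 <= n)%N)
  (u1 u2 : 'rV[R]_(n.+1)) :
  cvert u1 -> cvert u2 -> gdist_is u1 u2 2 ->
  gauge (@voronoi R n) (u1 - u2) = 1.
Proof.
move=> c1 c2 [[z [[_ [_ hz1]] [z' [[_ [_ hz2]] e]]]] nw].
rewrite /= in e; subst z'.
have n0 : u1 != u2 by apply/eqP => h; apply: (nw 0%N) => //.
have n1 : ~ Defs.half (@VP R n) (u1 - u2).
  move=> h; apply: (nw 1%N) => //; exists u2; split => //.
case: hz1 => a Va ea.
case: hz2 => b Vb eb.
have xe : forall i, (u1 - u2) 0 i = a 0 i / 2 + b 0 i / 2.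
  move=> i.
  have -> : u1 - u2 = (u1 - z) + (z - u2) by rewrite addrA subrK.
  by rewrite -ea -eb !mxE !(mulrC 2^-1).
have [Ha Hda] := vor_P Va.1.
have [Hb Hdb] := vor_P Vb.1.
have [al Hal] := VP_sub Va.
have [be Hbe] := VP_sub Vb.
have Hx : Hplane (u1 - u2).
  move: Ha Hb; rewrite /Hplane /= => Ha Hb.
  under eq_bigr do rewrite xe. by rewrite big_split /= -!mulr_suml Ha Hb !mul0r addr0.
have Vx : voronoi (u1 - u2).
  apply: P_vor; split => // i j; rewrite !xe.
  have := Hda i j; have := Hdb i j; lra.
set g := (al + be) / 2.
have Cx : forall i, (u1 - u2) 0 i = g \/ (u1 - u2) 0 i = g + 1/2 \/ (u1 - u2) 0 i = g + 1.
  move=> i; rewrite xe /g; case: (Hal i) => ->; case: (Hbe i) => ->;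
  [left|right;left|right;left|right;right]; lra.
have [i [j hij]] : exists i j, (u1 - u2) 0 i - (u1 - u2) 0 j = 1.
  case: (pselect (exists i, (u1 - u2) 0 i = g + 1)) => [[i hi]|no2].
    case: (pselect (exists j, (u1 - u2) 0 j = g)) => [[j hj]|no0].
      exists i, j; rewrite hi hj; lra.
    have := @half_or0 R n (u1 - u2) (g + 1/2) Hx.
    case.
    - move=> l; case: (Cx l) => [h|[h|h]]; [exfalso; apply: no0; by exists l|left|right]; lra.
    - by move/eqP; rewrite subr_eq0 (negbTE n0).
    - by move/n1.
  have := @half_or0 R n (u1 - u2) g Hx.
  case.
  - move=> l; case: (Cx l) => [h|[h|h]]; [left|right|exfalso; apply: no2; by exists l]; lra.
  - by move/eqP; rewrite subr_eq0 (negbTE n0).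
  - by move/n1.
rewrite /gauge.
set S := [set l : R | _].
have S1 : S 1.
  split; first exact: ler01.
  by exists (u1 - u2) => //; rewrite scale1r.
have lb : forall l, S l -> 1 <= l.
  move=> l [l0 [p Vp ep]].
  have [_ Hdp] := vor_P Vp.
  move: hij; rewrite ep !mxE => hij.
  have := Hdp i j; nra.
apply/eqP; rewrite eq_le; apply/andP; split.
  by apply: ge_inf => //; exists 1.
by apply: lb_le_inf => //; exists 1.
Qed.
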